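(* Let $g_{ij}(\eta)$ be $\mathcal G_{i,j-1}$-measurable random variables ($i,j\ge1$). Then, whenever all the integrals exist, $$E_\eta[g_{ij}(\eta)Z_{ij}(\theta)I_{ij}^{cen}\mid\mathcal G_{i,j-1}]=-E_\eta[g_{ij}(\eta)Z_{ij}(\theta)I_{ij}^{obs}\mid\mathcal G_{i,j-1}],$$ $$E_\eta[g_{ij}(\eta)(Z_{ij}^2(\theta)-\sigma^2)I_{ij}^{cen}\mid\mathcal G_{i,j-1}]=-E_\eta[g_{ij}(\eta)(Z_{ij}^2(\theta)-\sigma^2)I_{ij}^{obs}\mid\mathcal G_{i,j-1}].$$
   Context: Probability measures $P_\eta$, $\eta=(\theta^T,\sigma^2)^T\in K\subset\mathbb R^{p+1}$, on a measurable space; $E_\eta$ is expectation under $P_\eta$. For each subject $i\ge1$: event times $0=S_{i0}<S_{i1}<\cdots$, censoring time $0<C_i<\infty$, random covariates $x_{ij}$. $\mathcal F_{ij}=\sigma\{S_{il}\ (0\le l\le j);x_{il}\ (1\le l\le j+1)\}$, $\mathcal G_{ij}=\sigma\{\mathcal F_{ij},\{S_{ik}\le C_i\},\{S_{ik}=C_i\}\ (1\le k\le j)\}$ for $j\ge1$, $\mathcal G_{i0}=\mathcal F_{i0}$. Gap times $Y_{ij}=S_{ij}-S_{i,j-1}$ have finite second moments and satisfy $E_\theta[Y_{ij}\mid\mathcal F_{i,j-1}]=\mu_{ij}(\theta)$, $\mathrm{var}_\eta[Y_{ij}\mid\mathcal F_{i,j-1}]=\sigma^2V_{ij}^2(\theta)$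 with known $\mu_{ij}(\theta)$, $V_{ij}(\theta)>0$ that are $\mathcal F_{i,j-1}$-measurable. Standing assumption (A): $E_\theta[Y_{ij}\mid\mathcal G_{i,j-1}]=E_\theta[Y_{ij}\mid\mathcal F_{i,j-1}]$ and $\mathrm{var}_\eta[Y_{ij}\mid\mathcal G_{i,j-1}]=\mathrm{var}_\eta[Y_{ij}\mid\mathcal F_{i,j-1}]$. $Z_{ij}(\theta)=(Y_{ij}-\mu_{ij}(\theta))/V_{ij}(\theta)$. Indicators: $I_{ij}^{obs}=I\{S_{ij}\le C_i\}$, $I_{ij}^{cen}=I\{S_{i,j-1}<C_i<S_{ij}\}$. *)

(* Defs.v *)
From HB Require Import structures.
From mathcomp Require Import all_boot all_order all_algebra.
From mathcomp Require Import all_classical all_reals all_analysis.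
Set Implicit Arguments.
Unset Strict Implicit.
Unset Printing Implicit Defensive.
Import Order.TTheory GRing.Theory Num.Theory.
Local Open Scope classical_set_scope.
Local Open Scope ring_scope.

Section defs.
Context {d : measure_display} {T : measurableType d} {R : realType}.

Definition measurable_wrt (G : set (set T)) (f : T -> R) : Prop :=
  forall B : set R, measurable B -> G (f @^-1` B).

Definition is_condexp (P : probability T R) (G : set (set T)) (X Y : T -> R)
  : Prop :=
  [/\ P.-integrable setT (EFin \o X),
      P.-integrable setT (EFin \o Y),
      measurable_wrt G Y &
      forall A, G A ->
        (\int[P]_(w in A) (Y w)%:E = \int[P]_(w in A) (X w)%:E)%E].

Definition is_condvar (P : probability T R) (G : set (set T)) (X v : T -> R)
  : Prop :=
  exists m, is_condexp P G X m /\
            is_condexp P G (fun w => (X w - m w) ^+ 2) v.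

Context {dX : measure_display} {X : measurableType dX}.

Definition Fsig (S : nat -> nat -> T -> R) (x : nat -> nat -> T -> X)
  (i j : nat) : set (set T) :=
  <<s [set A | (exists l, (l <= j)%N /\
                   exists B : set R, measurable B /\ A = S i l @^-1` B)
            \/ (exists l, (1 <= l <= j.+1)%N /\
                   exists B : set X, measurable B /\ A = x i l @^-1` B)] >>.

Definition Gsig (S : nat -> nat -> T -> R) (C : nat -> T -> R)
  (x : nat -> nat -> T -> X) (i j : nat) : set (set T) :=
  <<s [set A | Fsig S x i j A \/
         exists k, (1 <= k <= j)%N /\
           (A = [set w | S i k w <= C i w] \/ A = [set w | S i k w = C i w])] >>.

End defs.

Section indicators.
Context {T : Type} {R : realType}.
Definition Iobs (S : nat -> nat -> T -> R) (C : nat -> T -> R) (i j : nat)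
  (w : T) : R := ((S i j w <= C i w)%R : bool)%:R.
Definition Icen (S : nat -> nat -> T -> R) (C : nat -> T -> R) (i j : nat)
  (w : T) : R := ((S i j.-1 w < C i w)%R && (C i w < S i j w)%R)%:R.
End indicators.

(* Main.v *)
Require Import Defs.
From HB Require Import structures.
From mathcomp Require Import all_boot all_order all_algebra.
From mathcomp Require Import all_classical all_reals all_analysis.
From mathcomp Require Import measurable_realfun.
From mathcomp Require Import lra zify ring.
Import Order.TTheory GRing.Theory Num.Theory.
Import numFieldNormedType.Exports.
Local Open Scope classical_set_scope.
Local Open Scope ring_scope.

Definition zk (k : nat) : int := if odd k then - (k./2.+1)%:Z else (k./2)%:Z.

Lemma zk_inj : injective zk.
Proof.
move=> k l; rewrite /zk => h.
rewrite -(odd_double_half k) -(odd_double_half l); move: h.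
case: (odd k); case: (odd l) => /= ?; lia.
Qed.

Lemma zk_surj (z : int) : exists k, zk k = z.
Proof.
case: z => n.
- exists n.*2; rewrite /zk odd_double /=; congr Posz; exact: doubleK.
- exists (n.*2).+1; rewrite /zk /= odd_double /= NegzE.
  by rewrite uphalf_double.
Qed.

Lemma itv_floor (R : realType) (dl x : R) (z : int) : 0 < dl ->
  (z%:~R * dl <= x < (z + 1)%:~R * dl) = (Num.floor (x / dl) == z).
Proof.
move=> dl0; rewrite floor_eq ler_pdivlMr// ltr_pdivrMr//.
Qed.

Section core.
Context {d : measure_display} {T : measurableType d} {R : realType}
  (P : probability T R) (Gen : set (set T)) (HGen : Gen `<=` measurable).
Local Notation Gs := (<<s Gen>>).

Lemma Gs_meas : Gs `<=` measurable.
Proof. apply: smallest_sub => //; exact: sigma_algebra_measurable. Qed.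

Lemma GsI A B : Gs A -> Gs B -> Gs (A `&` B).
Proof. exact: (@measurableI _ (g_sigma_algebraType Gen)). Qed.

Local Open Scope ereal_scope.
Lemma piece (h f : T -> R) (a dl : R) (A : set T) : (0 <= dl)%R -> Gs A ->
  (forall w, A w -> `|h w - a| <= dl)%R ->
  P.-integrable setT (EFin \o f) ->
  P.-integrable setT (EFin \o (fun w => h w * f w)%R) ->
  \int[P]_(w in A) (f w)%:E = 0 ->
  \int[P]_(w in A) (h w * f w)%:E <= dl%:E * \int[P]_(w in A) `|f w|%:E.
Proof.
move=> dl0 GA hA fi hfi f0.
have mA : measurable A := Gs_meas _ GA.
have fiA : P.-integrable A (EFin \o f) by exact: integrableS fi.
have hfiA : P.-integrable A (EFin \o (fun w => h w * f w)%R) by exact: integrableS hfi.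
have afiA : P.-integrable A (fun w => a%:E * (EFin \o f) w) by exact: integrableZl.
have -> : \int[P]_(w in A) (h w * f w)%:E =
   \int[P]_(w in A) ((h w * f w)%:E - a%:E * (f w)%:E).
  by have := integralB mA hfiA afiA => /= ->; rewrite integralZl// f0 mule0 sube0.
have mF : measurable_fun A (fun w => ((h w * f w)%:E - a%:E * (f w)%:E : \bar R)).
  by apply: measurable_int; exact: (integrableB mA hfiA afiA).
apply: (le_trans (lee_abs _)).
apply: (le_trans (le_abse_integral P mA mF)).
have mf : measurable_fun A f.
  by apply/measurable_EFinP; exact: measurable_int fiA.
have maf : measurable_fun A (fun x => `|f x|%:E).
  by apply: measurableT_comp => //; exact: measurableT_comp.
rewrite -ge0_integralZl_EFin//.
apply: ge0_le_integral => //.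
- exact: measurableT_comp.
- have -> : (fun x => dl%:E * `|f x|%:E) = EFin \o (fun x => dl * `|f x|)%R.
    by apply: funext => x; rewrite /= EFinM.
  apply/measurable_EFinP; apply: measurable_funM => //.
  by apply: measurableT_comp.
- move=> w Aw /=; rewrite -EFinM lee_fin -mulrBl normrM.
  by apply: ler_wpM2r => //; exact: hA.
Qed.

Lemma Ipos_le (W h f : T -> R) :
  measurable_wrt Gs W -> measurable_wrt Gs h ->
  P.-integrable setT (EFin \o f) ->
  P.-integrable setT (EFin \o (fun w => h w * f w)%R) ->
  (forall A, Gs A -> \int[P]_(w in A) (f w)%:E = 0) ->
  (forall A, Gs A -> \int[P]_(w in A) (W w)%:E = \int[P]_(w in A) (h w * f w)%:E) ->
  forall dl : R, (0 < dl)%R ->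
  \int[P]_(w in W @^-1` `]0%R, +oo[) (W w)%:E <=
    dl%:E * \int[P]_(w in setT) `|f w|%:E.
Proof.
move=> mW mh fi hfi f0 Wh dl dl0.
set Pos := W @^-1` `]0%R, +oo[.
have GPos : Gs Pos by apply: mW; exact: measurable_itv.
have mPos : measurable Pos := Gs_meas _ GPos.
have PosE w : Pos w -> (0 < W w)%R by rewrite /Pos /= in_itv /= andbT.
have mfW : measurable_fun setT W.
  move=> _ B mB; rewrite setTI; exact: Gs_meas (mW _ mB).
have mf : measurable_fun setT f by apply/measurable_EFinP; exact: measurable_int fi.
pose E k := Pos `&` h @^-1` `[((zk k)%:~R * dl)%R, ((zk k + 1)%:~R * dl)%R[.
have GE k : Gs (E k) by apply: GsI => //; apply: mh; exact: measurable_itv.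
have mE k : measurable (E k) := Gs_meas _ (GE k).
have PosU : Pos = \bigcup_k E k.
  apply/seteqP; split => [w Pw|w [k _ []//]].
  have [k hk] := zk_surj (Num.floor (h w / dl)).
  by exists k => //; split => //; rewrite /= in_itv /= itv_floor// hk.
have tE : trivIset setT E.
  move=> k l _ _ [w [[_ hk] [_ hl]]]; apply: zk_inj.
  by move: hk hl; rewrite /= !in_itv /= !itv_floor// => /eqP <- /eqP <-.
rewrite PosU ge0_integral_bigcup//; last 2 first.
- apply/measurable_EFinP; exact: measurable_funS mfW.
- by move=> w [k _ [/PosE/ltW]]; rewrite lee_fin.
apply: (@le_trans _ _ (\sum_(k <oo) (dl%:E * \int[P]_(w in E k) `|f w|%:E))).
  apply: lee_nneseries.
    by move=> k _ _; apply: integral_ge0 => w [/PosE/ltW]; rewrite lee_fin.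
  move=> k _; rewrite Wh//; apply: (@piece _ _ ((zk k)%:~R * dl)%R) => //.
  - exact: ltW.
  - move=> w [_]; rewrite /= in_itv /= intrD mulrDl mul1r => /andP[h1 h2].
    by rewrite ger0_norm ?subr_ge0// lerBlDl ltW.
  - exact: f0.
rewrite nneseriesZl; last by move=> k _; apply: integral_ge0.
rewrite -ge0_integral_bigcup//; last first.
  by apply: measurableT_comp => //; apply: measurableT_comp => //; exact: measurable_funS mf.
rewrite -PosU; apply: lee_wpmul2l; first by rewrite lee_fin ltW.
apply: ge0_subset_integral => //.
by apply: measurableT_comp => //; apply: measurableT_comp.
Qed.

Lemma nonpos (W h f : T -> R) :
  measurable_wrt Gs W -> measurable_wrt Gs h ->
  P.-integrable setT (EFin \o f) ->
  P.-integrable setT (EFin \o (fun w => h w * f w)%R) ->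
  (forall A, Gs A -> \int[P]_(w in A) (f w)%:E = 0) ->
  (forall A, Gs A -> \int[P]_(w in A) (W w)%:E = \int[P]_(w in A) (h w * f w)%:E) ->
  {ae P, forall w, (W w <= 0)%R}.
Proof.
move=> mW mh fi hfi f0 Wh.
have Hle := @Ipos_le W h f mW mh fi hfi f0 Wh.
set Pos := W @^-1` `]0%R, +oo[ in Hle.
have GPos : Gs Pos by apply: mW; exact: measurable_itv.
have mPos : measurable Pos := Gs_meas _ GPos.
have PosE w : Pos w = (0 < W w)%R by rewrite /Pos /= in_itv /= andbT.
have mfW : measurable_fun setT W.
  move=> _ B mB; rewrite setTI; exact: Gs_meas (mW _ mB).
have mf : measurable_fun setT f by apply/measurable_EFinP; exact: measurable_int fi.
have I0 : 0 <= \int[P]_(w in Pos) (W w)%:E.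
  by apply: integral_ge0 => w; rewrite PosE lee_fin => /ltW.
have cfin : \int[P]_(w in setT) `|f w|%:E \is a fin_num.
  exact: (integrable_fin_num measurableT (integrable_abse fi)).
have c0 : 0 <= \int[P]_(w in setT) `|f w|%:E by apply: integral_ge0.
have Ile0 : \int[P]_(w in Pos) (W w)%:E <= 0.
  move: (Hle 1%R ltr01); rewrite mul1e => Ile.
  have Ifin : \int[P]_(w in Pos) (W w)%:E \is a fin_num.
    rewrite ge0_fin_numE//; apply: le_lt_trans; first exact: Ile.
    by move/fin_numPlt: cfin => /andP[].
  move: Hle I0 c0 cfin Ifin Ile.
  case: (\int[P]_(w in Pos) (W w)%:E) => // r.
  case: (\int[P]_(w in setT) `|f w|%:E) => // c Hle r0 c0 _ _ _.
  rewrite lee_fin; rewrite lee_fin in r0 c0.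
  rewrite leNgt; apply/negP => rpos.
  have e0 : (0 < r / 2 / (c + 1))%R by rewrite !divr_gt0// ltr_wpDl.
  have := Hle _ e0; rewrite -EFinM lee_fin => H.
  have : (r / 2 / (c + 1) * c <= r / 2)%R.
    rewrite mulrAC ler_pdivrMr ?ltr_wpDl//.
    rewrite mulrDr mulr1 lerDl; exact: divr_ge0.
  lra.
have Iabs : \int[P]_(w in Pos) `|(W w)%:E| = 0.
  apply/eqP; rewrite eq_le integral_ge0 ?andbT//.
  apply: le_trans Ile0; rewrite le_eqVlt; apply/orP; left; apply/eqP.
  by apply: eq_integral => w; rewrite inE PosE => /ltW Wge0; rewrite gee0_abs// lee_fin.
have mWP : measurable_fun Pos (EFin \o W).
  by apply/measurable_EFinP; exact: measurable_funS mfW.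
have := (ae_eq_integral_abs P mPos mWP).1 Iabs.
apply: filterS => w Hw; rewrite leNgt; apply/negP => Wpos.
have := Hw; rewrite PosE => /(_ Wpos) /= [] /eqP; rewrite gt_eqF//.
Qed.

Local Notation TG := (g_sigma_algebraType Gen).

Lemma mwrtE (f : T -> R) :
  measurable_wrt Gs f <-> measurable_fun (setT : set TG) (f : TG -> R).
Proof.
split => H.
  by move=> _ B mB; rewrite setTI; exact: H.
by move=> B mB; have := H measurableT B mB; rewrite setTI.
Qed.

Lemma ae_zero (W h f : T -> R) :
  measurable_wrt Gs W -> measurable_wrt Gs h ->
  P.-integrable setT (EFin \o W) ->
  P.-integrable setT (EFin \o f) ->
  P.-integrable setT (EFin \o (fun w => h w * f w)%R) ->
  (forall A, Gs A -> \int[P]_(w in A) (f w)%:E = 0) ->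
  (forall A, Gs A -> \int[P]_(w in A) (W w)%:E = \int[P]_(w in A) (h w * f w)%:E) ->
  {ae P, forall w, W w = 0%R}.
Proof.
move=> mW mh Wi fi hfi f0 Wh.
have H1 := @nonpos W h f mW mh fi hfi f0 Wh.
have mW' : measurable_wrt Gs (fun w => - W w)%R.
  by apply/mwrtE; apply: measurable_funN; apply/mwrtE.
have mh' : measurable_wrt Gs (fun w => - h w)%R.
  by apply/mwrtE; apply: measurable_funN; apply/mwrtE.
have hfi' : P.-integrable setT (EFin \o (fun w => - h w * f w)%R).
  apply: (eq_integrable _ _ _ _ (integrableN hfi)) => // w _ /=.
  by rewrite mulNr.
have Wh' : forall A, Gs A -> \int[P]_(w in A) (- W w)%:E =
    \int[P]_(w in A) (- h w * f w)%:E.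
  move=> A GA; have mA : measurable A := Gs_meas _ GA.
  have e1 : \int[P]_(w in A) (- W w)%:E = \int[P]_(w in A) ((-1)%:E * (W w)%:E).
    by apply: eq_integral => w _; rewrite -EFinM mulN1r.
  have e2 : \int[P]_(w in A) (- h w * f w)%:E =
      \int[P]_(w in A) ((-1)%:E * (h w * f w)%:E).
    by apply: eq_integral => w _; rewrite -EFinM mulN1r mulNr.
  rewrite e1 e2 (integralZl mA (integrableS measurableT mA (subsetT _) Wi)).
  by rewrite (integralZl mA (integrableS measurableT mA (subsetT _) hfi)) Wh.
have H2 := @nonpos _ _ f mW' mh' fi hfi' f0 Wh'.
apply: filterS2 H1 H2 => w /= h1 h2.
by apply/eqP; rewrite eq_le h1; move: h2; rewrite oppr_le0.
Qed.

Lemma final (X1 X2 Y1 Y2 h f : T -> R) :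
  is_condexp P Gs X1 Y1 -> is_condexp P Gs X2 Y2 ->
  (forall w, X1 w + X2 w = h w * f w)%R ->
  measurable_wrt Gs h -> P.-integrable setT (EFin \o f) ->
  (forall A, Gs A -> \int[P]_(w in A) (f w)%:E = 0) ->
  {ae P, forall w, Y1 w = - Y2 w}%R.
Proof.
case=> X1i Y1i mY1 E1 [X2i Y2i mY2 E2] hX mh fi f0.
have hfi : P.-integrable setT (EFin \o (fun w => h w * f w)%R).
  apply: (eq_integrable _ _ _ _ (integrableD measurableT X1i X2i)) => // w _ /=.
  by rewrite -hX.
have Wi : P.-integrable setT (EFin \o (fun w => Y1 w + Y2 w)%R).
  exact: (eq_integrable _ _ _ _ (integrableD measurableT Y1i Y2i)).
have mW : measurable_wrt Gs (fun w => Y1 w + Y2 w)%R.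
  by apply/mwrtE; apply: measurable_funD; apply/mwrtE.
have Wh : forall A, Gs A -> \int[P]_(w in A) (Y1 w + Y2 w)%:E =
    \int[P]_(w in A) (h w * f w)%:E.
  move=> A GA; have mA : measurable A := Gs_meas _ GA.
  have sA := subsetT A.
  rewrite (eq_integral (fun w => (Y1 w)%:E + (Y2 w)%:E)) //.
  rewrite (integralD mA (integrableS measurableT mA sA Y1i) (integrableS measurableT mA sA Y2i)).
  rewrite E1 // E2 // -(integralD mA (integrableS measurableT mA sA X1i) (integrableS measurableT mA sA X2i)).
  by apply: eq_integral => w _; rewrite /= -EFinD hX.
have := @ae_zero _ h f mW mh Wi fi hfi f0 Wh.
by apply: filterS => w /= /eqP; rewrite addr_eq0 => /eqP.
Qed.
End core.

Lemma measurable_invR (R : realType) : measurable_fun (setT : set R) (fun x : R => x^-1).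
Proof.
move=> _ B mB; rewrite setTI.
have mD : measurable (~` [set (0:R)]) by apply: measurableC; exact: measurable_set1.
have oD : open (~` [set (0:R)]).
  apply: closed_openC; exact: closed_eq.
have cD : {in ~` [set (0:R)], continuous (fun x : R => x^-1)}.
  by move=> x; rewrite inE /= => /eqP x0; exact: inv_continuous.
have h1 := open_continuous_measurable_fun oD cD mD mB.
have -> : (fun x : R => x^-1) @^-1` B =
   (~` [set 0] `&` (fun x : R => x^-1) @^-1` B) `|` ([set 0] `&` (fun x : R => x^-1) @^-1` B).
  by rewrite -setIUl setvU setTI.
apply: measurableU => //.
case: (pselect (B 0)) => B0.
  have -> : [set 0] `&` (fun x : R => x^-1) @^-1` B = [set 0].
    by apply/seteqP; split => [x []//|x /= ->]; split => //=; rewrite invr0.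
  exact: measurable_set1.
have -> : [set 0] `&` (fun x : R => x^-1) @^-1` B = set0.
  by apply/seteqP; split => [x [/= -> ]|//]; rewrite /= invr0.
exact: measurable0.
Qed.

Section sigs.
Context {d : measure_display} {T : measurableType d} {R : realType}
  {dX : measure_display} {X : measurableType dX}
  (S : nat -> nat -> T -> R) (C : nat -> T -> R) (x : nat -> nat -> T -> X)
  (HSm : forall i j, measurable_fun setT (S i j))
  (HCm : forall i, measurable_fun setT (C i))
  (Hxm : forall i j, measurable_fun setT (x i j))
  (HS0 : forall i w, S i 0 w = 0)
  (HCpos : forall i w, 0 < C i w).

Lemma Fsig_meas i n : Fsig S x i n `<=` measurable.
Proof.
apply: smallest_sub; first exact: sigma_algebra_measurable.
move=> A [[l [_ [B [mB ->]]]]|[l [_ [B [mB ->]]]]].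
- by have := HSm i l measurableT _ mB; rewrite setTI.
- by have := Hxm i l measurableT _ mB; rewrite setTI.
Qed.

Lemma meas_le (f g : T -> R) : measurable_fun setT f -> measurable_fun setT g ->
  measurable [set w | f w <= g w].
Proof.
move=> mf mg; have := measurable_fun_ler mf mg measurableT (Y := [set true]) I.
by rewrite setTI.
Qed.

Lemma meas_eq (f g : T -> R) : measurable_fun setT f -> measurable_fun setT g ->
  measurable [set w | f w = g w].
Proof.
move=> mf mg.
rewrite (_ : [set w | f w = g w] = [set w | f w <= g w] `&` [set w | g w <= f w]).
  by apply: measurableI; exact: meas_le.
apply/seteqP; split => w /=; first by move=> ->.
by move=> [h1 h2]; apply/eqP; rewrite eq_le h1 h2.
Qed.

Lemma GenG_meas i n :
  [set A | Fsig S x i n A \/ exists k, (1 <= k <= n)%N /\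
    (A = [set w | S i k w <= C i w] \/ A = [set w | S i k w = C i w])]
  `<=` measurable.
Proof.
move=> A [/Fsig_meas//|[k [_ [->|->]]]]; [exact: meas_le | exact: meas_eq].
Qed.

Lemma Fsig_sub_Gsig i n : Fsig S x i n `<=` Gsig S C x i n.
Proof. by move=> A FA; apply: sub_gen_smallest; left. Qed.

Lemma Gsig_lt i n : Gsig S C x i n [set w | S i n w < C i w].
Proof.
case: n => [|n].
  have -> : [set w | S i 0 w < C i w] = setT.
    by apply/seteqP; split => w //= _; rewrite HS0 HCpos.
  exact: (@measurableT _ (g_sigma_algebraType _)).
have -> : [set w | S i n.+1 w < C i w] =
    [set w | S i n.+1 w <= C i w] `\` [set w | S i n.+1 w = C i w].
  apply/seteqP; split => w /=; rewrite lt_neqAle.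
    by move=> /andP[/eqP h1 h2].
  by move=> [h1 /eqP h2]; rewrite h1 h2.
apply: (@measurableD _ (g_sigma_algebraType _)); apply: sub_gen_smallest; right;
  exists n.+1; (split; first by rewrite leqnn); [left | right] => //.
Qed.

Lemma indic_wrt (Gen : set (set T)) (b : T -> bool) :
  <<s Gen >> [set w | b w] -> measurable_wrt <<s Gen >> (fun w => (b w)%:R : R).
Proof.
move=> Gb B mB.
case: (pselect (B 1)) => B1; case: (pselect (B 0)) => B0.
- have -> : (fun w => (b w)%:R : R) @^-1` B = setT.
    by apply/seteqP; split => w //= _; case: (b w).
  exact: (@measurableT _ (g_sigma_algebraType Gen)).
- have -> // : (fun w => (b w)%:R : R) @^-1` B = [set w | b w].
  by apply/seteqP; split => w /=; case: (b w).
- have -> : (fun w => (b w)%:R : R) @^-1` B = ~` [set w | b w].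
    by apply/seteqP; split => w /=; case: (b w).
  exact: (@measurableC _ (g_sigma_algebraType Gen)).
- have -> : (fun w => (b w)%:R : R) @^-1` B = set0.
    by apply/seteqP; split => w //=; case: (b w).
  exact: (@measurable0 _ (g_sigma_algebraType Gen)).
Qed.

End sigs.

Theorem lemma2p1
  (R : realType) (d : measure_display) (T : measurableType d)
  (dX : measure_display) (X : measurableType dX) (p : nat)
  (K : set ('rV[R]_p * R))
  (P : 'rV[R]_p * R -> probability T R)
  (S : nat -> nat -> T -> R) (C : nat -> T -> R) (x : nat -> nat -> T -> X)
  (mu V : nat -> nat -> 'rV[R]_p -> T -> R)
  (g : nat -> nat -> 'rV[R]_p * R -> T -> R)
  (* event times, censoring, covariates are random variables *)
  (HSm : forall i j, measurable_fun setT (S i j))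
  (HCm : forall i, measurable_fun setT (C i))
  (Hxm : forall i j, measurable_fun setT (x i j))
  (* 0 = S_i0 < S_i1 < ... ; 0 < C_i *)
  (HS0 : forall i w, S i 0 w = 0)
  (HSinc : forall i j w, S i j w < S i j.+1 w)
  (HCpos : forall i w, 0 < C i w)
  (* mu_ij(theta), V_ij(theta) > 0 are F_{i,j-1}-measurable *)
  (Hmum : forall i j th, (1 <= i)%N -> (1 <= j)%N ->
     measurable_wrt (Fsig S x i j.-1) (mu i j th))
  (HVm : forall i j th, (1 <= i)%N -> (1 <= j)%N ->
     measurable_wrt (Fsig S x i j.-1) (V i j th))
  (HVpos : forall i j th w, (1 <= i)%N -> (1 <= j)%N -> 0 < V i j th w)
  (* gap times have finite second moments *)
  (HY2 : forall i j eta, K eta -> (1 <= i)%N -> (1 <= j)%N ->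
     (P eta).-integrable setT (EFin \o (fun w => S i j w - S i j.-1 w)) /\
     (P eta).-integrable setT (EFin \o (fun w => (S i j w - S i j.-1 w) ^+ 2)))
  (* conditional mean and variance given F_{i,j-1} *)
  (HmeanF : forall i j eta, K eta -> (1 <= i)%N -> (1 <= j)%N ->
     is_condexp (P eta) (Fsig S x i j.-1) (fun w => S i j w - S i j.-1 w)
       (mu i j eta.1))
  (HvarF : forall i j eta, K eta -> (1 <= i)%N -> (1 <= j)%N ->
     is_condvar (P eta) (Fsig S x i j.-1) (fun w => S i j w - S i j.-1 w)
       (fun w => eta.2 * V i j eta.1 w ^+ 2))
  (* assumption (A): same conditional mean and variance given G_{i,j-1} *)
  (HmeanG : forall i j eta, K eta -> (1 <= i)%N -> (1 <= j)%N ->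
     is_condexp (P eta) (Gsig S C x i j.-1) (fun w => S i j w - S i j.-1 w)
       (mu i j eta.1))
  (HvarG : forall i j eta, K eta -> (1 <= i)%N -> (1 <= j)%N ->
     is_condvar (P eta) (Gsig S C x i j.-1) (fun w => S i j w - S i j.-1 w)
       (fun w => eta.2 * V i j eta.1 w ^+ 2))
  (* g_ij(eta) is G_{i,j-1}-measurable *)
  (Hgm : forall i j eta, K eta -> (1 <= i)%N -> (1 <= j)%N ->
     measurable_wrt (Gsig S C x i j.-1) (g i j eta)) :
  forall eta i j, K eta -> (1 <= i)%N -> (1 <= j)%N ->
  let Z := fun w => (S i j w - S i j.-1 w - mu i j eta.1 w) / V i j eta.1 w in
  let G := Gsig S C x i j.-1 in
  (forall Ycen Yobs : T -> R,
     is_condexp (P eta) G (fun w => g i j eta w * Z w * Icen S C i j w) Ycen ->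
     is_condexp (P eta) G (fun w => g i j eta w * Z w * Iobs S C i j w) Yobs ->
     {ae P eta, forall w, Ycen w = - Yobs w}) /\
  (forall Ycen Yobs : T -> R,
     is_condexp (P eta) G
       (fun w => g i j eta w * (Z w ^+ 2 - eta.2) * Icen S C i j w) Ycen ->
     is_condexp (P eta) G
       (fun w => g i j eta w * (Z w ^+ 2 - eta.2) * Iobs S C i j w) Yobs ->
     {ae P eta, forall w, Ycen w = - Yobs w}).
Proof.
move=> eta i j Keta i1 j1 Z G.
pose GenG := [set A | Fsig S x i j.-1 A \/ exists k, (1 <= k <= j.-1)%N /\
    (A = [set w | S i k w <= C i w] \/ A = [set w | S i k w = C i w])].
have HGen : GenG `<=` measurable := @GenG_meas _ _ _ _ _ S C x HSm HCm Hxm i j.-1.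
pose Y := fun w => S i j w - S i j.-1 w.
have mYT : measurable_fun setT Y by apply: measurable_funB.
have FsubG : Fsig S x i j.-1 `<=` G := Fsig_sub_Gsig S C x i j.-1.
have mmuG : measurable_wrt G (mu i j eta.1).
  by move=> B mB; apply: FsubG; exact: Hmum.
have mVG : measurable_wrt G (V i j eta.1).
  by move=> B mB; apply: FsubG; exact: HVm.
have mgG := Hgm i j eta Keta i1 j1.
pose H := fun w => (((S i j.-1 w < C i w)%R : bool)%:R : R).
have mHG : measurable_wrt G H := @indic_wrt _ _ _ GenG (fun w => (S i j.-1 w < C i w)%R) (@Gsig_lt _ _ _ _ _ S C x HS0 HCpos i j.-1).
have HE w : Icen S C i j w + Iobs S C i j w = H w.
  rewrite /Icen /Iobs /H.
  have := HSinc i j.-1 w; rewrite prednK // => hs.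
  rewrite [S i j w <= C i w]leNgt.
  case: (ltrP (S i j.-1 w) (C i w)) => h1; case: (ltrP (C i w) (S i j w)) => h2 /=.
  - by rewrite addr0.
  - by rewrite add0r.
  - by rewrite addr0.
  - by have := lt_le_trans hs (le_trans h2 h1); rewrite ltxx.
have [Yi mui _ Emu] := HmeanG i j eta Keta i1 j1.
have mmuT : measurable_fun setT (mu i j eta.1).
  by apply/measurable_EFinP; exact: measurable_int mui.
have mVT : measurable_fun setT (V i j eta.1).
  move=> _ B mB; rewrite setTI; apply: (@Fsig_meas _ _ _ _ _ S x HSm Hxm i j.-1).
  exact: HVm.
have mVinvG : measurable_wrt G (fun w => (V i j eta.1 w)^-1).
  apply/(mwrtE GenG); apply: measurableT_comp; first exact: measurable_invR.
  by apply/(mwrtE GenG).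
have Vneq0 w : V i j eta.1 w != 0 by rewrite gt_eqF// HVpos.
split.
- move=> Ycen Yobs hc ho.
  apply: (@final _ _ _ (P eta) GenG HGen _ _ _ _
    (fun w => g i j eta w * H w * (V i j eta.1 w)^-1)
    (fun w => Y w - mu i j eta.1 w) hc ho).
  + move=> w; rewrite -HE /Z /Y; ring.
  + apply/(mwrtE GenG); apply: measurable_funM; last exact/(mwrtE GenG).
    by apply: measurable_funM; apply/(mwrtE GenG).
  + by apply: (eq_integrable _ _ _ _ (integrableB measurableT Yi mui)).
  + move=> A GA; have mA : measurable A := @Gs_meas _ _ GenG HGen A GA.
    have sA := subsetT A.
    rewrite (eq_integral (fun w => ((Y w)%:E - (mu i j eta.1 w)%:E)%E)); last first.
      by move=> w _; rewrite EFinB.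
    rewrite (integralB_EFin mA (integrableS measurableT mA sA Yi) (integrableS measurableT mA sA mui)).
    rewrite Emu // subee //.
    exact: (integrable_fin_num mA (integrableS measurableT mA sA Yi)).
- move=> Ycen Yobs hc ho.
  have [m [hm hv]] := HvarG i j eta Keta i1 j1.
  have [_ mi mmG Em] := hm.
  have [Y2mi vi _ Ev] := hv.
  have mmT : measurable_fun setT m.
    by apply/measurable_EFinP; exact: measurable_int mi.
  have aem : {ae P eta, forall w, m w - mu i j eta.1 w = 0}.
    apply: (@ae_zero _ _ _ (P eta) GenG HGen (fun w => m w - mu i j eta.1 w)
      (fun _ => 0) (fun _ => 0)).
    + by apply/(mwrtE GenG); apply: measurable_funB; apply/(mwrtE GenG).
    + by apply/(mwrtE GenG); exact: measurable_cst.
    + by apply: (eq_integrable _ _ _ _ (integrableB measurableT mi mui)).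
    + by apply: (eq_integrable _ _ _ _ (integrable0 (P eta) setT)).
    + apply: (eq_integrable _ _ _ _ (integrable0 (P eta) setT)) => // w _.
      by rewrite /= mulr0.
    + by move=> A _; apply: integral0_eq.
    + move=> A GA; have mA : measurable A := @Gs_meas _ _ GenG HGen A GA.
      have sA := subsetT A.
      rewrite [RHS]integral0_eq; last by move=> w _; rewrite mulr0.
      rewrite (eq_integral (fun w => ((m w)%:E - (mu i j eta.1 w)%:E)%E)); last first.
        by move=> w _; rewrite EFinB.
      rewrite (integralB_EFin mA (integrableS measurableT mA sA mi) (integrableS measurableT mA sA mui)).
      rewrite Em // Emu // subee //.
      exact: (integrable_fin_num mA (integrableS measurableT mA sA Yi)).
  pose f2 := fun w => (Y w - mu i j eta.1 w) ^+ 2 - eta.2 * V i j eta.1 w ^+ 2.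
  pose f2' := fun w => (Y w - m w) ^+ 2 - eta.2 * V i j eta.1 w ^+ 2.
  have aef : {ae P eta, forall w, f2 w = f2' w}.
    apply: filterS aem => w /eqP; rewrite subr_eq0 => /eqP e.
    by rewrite /f2 /f2' e.
  have f2'i : (P eta).-integrable setT (EFin \o f2').
    by apply: (eq_integrable _ _ _ _ (integrableB measurableT Y2mi vi)).
  have mf2 : measurable_fun setT f2.
    apply: measurable_funB; first by apply: measurable_funX; apply: measurable_funB.
    by apply: measurable_funM => //; apply: measurable_funX.
  have mf2' : measurable_fun setT f2'.
    apply: measurable_funB; first by apply: measurable_funX; apply: measurable_funB.
    by apply: measurable_funM => //; apply: measurable_funX.
  have f2i : (P eta).-integrable setT (EFin \o f2).
    apply/integrableP; split; first exact/measurable_EFinP.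
    rewrite (ae_eq_integral (fun w => `|(f2' w)%:E|%E)) //.
    - by case/integrableP: f2'i.
    - by apply: measurableT_comp => //; exact/measurable_EFinP.
    - by apply: measurableT_comp => //; exact/measurable_EFinP.
    - by apply: filterS aef => w /= -> _.
  have f20 : forall A, G A -> (\int[P eta]_(w in A) (f2 w)%:E = 0)%E.
    move=> A GA; have mA : measurable A := @Gs_meas _ _ GenG HGen A GA.
    have sA := subsetT A.
    rewrite (ae_eq_integral (fun w => (f2' w)%:E)) //.
    - rewrite (eq_integral (fun w => (((Y w - m w) ^+ 2)%:E - (eta.2 * V i j eta.1 w ^+ 2)%:E)%E)); last first.
        by move=> w _; rewrite EFinB.
      rewrite (integralB_EFin mA (integrableS measurableT mA sA Y2mi) (integrableS measurableT mA sA vi)).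
      rewrite Ev // subee //.
      exact: (integrable_fin_num mA (integrableS measurableT mA sA Y2mi)).
    - by apply/measurable_EFinP; exact: measurable_funS mf2.
    - by apply/measurable_EFinP; exact: measurable_funS mf2'.
    - by apply: filterS aef => w /= -> _.
  apply: (@final _ _ _ (P eta) GenG HGen _ _ _ _
    (fun w => g i j eta w * H w * (V i j eta.1 w)^-1 ^+ 2) f2 hc ho) => //.
  + move=> w; rewrite -HE /Z /f2 /Y; have := Vneq0 w; move: (V i j eta.1 w) => v v0.
    by field.
  + apply/(mwrtE GenG); apply: measurable_funM; last first.
      by apply: measurable_funX; apply/(mwrtE GenG).
    by apply: measurable_funM; apply/(mwrtE GenG).
Qed.
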